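(* Let $m\ge 2$ be an integer and let $\mathcal{A}\subset\mathbb{R}$ be a finite alphabet. Let $(X^{(j)}_i)_{i\ge 1,\,1\le j\le m}$ be independent and identically distributed random variables with values in $\mathcal{A}$. Let $S:\mathcal{A}^m\to[0,\infty)$ be a function that is not identically zero, is invariant under permutations of its $m$ arguments, satisfies $\sup_{x\in\mathcal{A}^m}S(x)<\infty$, and for which there is a constant $D>0$ such that $|S(x)-S(y)|\le D$ whenever $x,y\in\mathcal{A}^m$ differ in at most one coordinate. Let $\gamma^*$ and $\gamma^*(p_2,\dots,p_m)$ be as defined in the context. Let $\varepsilon>0$, let $\delta^*\in(0,\gamma^* )$, and let $\boldsymbol p^{(1)}=(p^{(1)}_1,\dots,p^{(1)}_m)$, $\boldsymbol p^{(2)}=(p^{(2)}_1,\dots,p^{(2)}_m)$ satisfy $0<p^{(1)}_j<1<p^{(2)}_j$ for $j=2,\dots,m$, and be such that $\gamma^*(p_2,\dots,p_m)\le\delta^*$ for every $(p_2,\dots,p_m)\in(0,\infty)^{m-1}$ with $p_j\notin[p^{(1)}_j,p^{(2)}_j]$ for at least one $j\in\{2,\dots,m\}$. Let $\eta\in(0,\gamma^*-\delta^* )$. Then there exists $N=N(\varepsilon,\eta,\boldsymbol p^{(1)},\boldsymbol p^{(2)})$ such that for every $n\ge N$, all positive integers $v,d$ with $n=vd$, and every $\vec r\in\overline{\mathcal R}_{n,\varepsilon}(\boldsymbol p^{(1)},\boldsymbol p^{(2)})$, $$\mathbb{E}\big(L(\vec r)-L_n\big)\le-\frac{\eta\varepsilon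 n}{m}.$$
   Context: Alignments and optimal score: for finite words $w^{(1)},\dots,w^{(m)}$ over $\mathcal{A}$ of lengths $\ell_1,\dots,\ell_m$, an alignment is a choice of an integer $k\ge 0$ and, for each $j$, indices $1\le \pi^{(j)}_1<\cdots<\pi^{(j)}_k\le \ell_j$; its score is $\sum_{i=1}^k S(w^{(1)}_{\pi^{(1)}_i},\dots,w^{(m)}_{\pi^{(m)}_i})$. The optimal score $L(w^{(1)};\dots;w^{(m)})$ is the maximum score over all alignments (empty words allowed). $L_n$ denotes the optimal score of the words $X^{(j)}_1\cdots X^{(j)}_n$, $j=1,\dots,m$, and $\gamma^*:=\lim_n\mathbb{E}(L_n)/n=\sup_n\mathbb{E}(L_n)/n$. For $p_2,\dots,p_m>0$, $\gamma^*(p_2,\dots,p_m):=\lim_{n\to\infty}\frac{m\,\mathbb{E}\big(L(X^{(1)}_1\cdots X^{(1)}_n;\,X^{(2)}_1\cdots X^{(2)}_{\lceil np_2\rceil};\cdots;X^{(m)}_1\cdots X^{(m)}_{\lceil np_m\rceil})\big)}{n(1+\sum_{i=2}^m p_i)}$ (the limit exists). For $n=vd$, a tuple $\vec r=(r^{(j)}_k)_{2\le j\le m,\,0\le k\le d}$ of integers with $0=r^{(j)}_0\le r^{(j)}_1\le\cdots\le r^{(j)}_{d-1}\le r^{(j)}_d=n$ for each $j$ defines $L(\vec r):=\sum_{k=1}^d L\big((X^{(1)}_i)_{i=v(k-1)+1}^{vk};\,(X^{(2)}_i)_{i=r^{(2)}_{k-1}+1}^{r^{(2)}_k};\cdots;(X^{(m)}_i)_{i=r^{(m)}_{k-1}+1}^{r^{(m)}_k}\big)$.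 $\overline{\mathcal R}_{n,\varepsilon}(\boldsymbol p^{(1)},\boldsymbol p^{(2)})$ is the set of all such (non-random) tuples $\vec r$ for which $\mathrm{Card}\{k\in\{1,\dots,d\}:\ vp^{(1)}_j\le r^{(j)}_k-r^{(j)}_{k-1}\le vp^{(2)}_j\ \text{for all } j=2,\dots,m\}<(1-\varepsilon)d$. *)

(* Defs.v *)
From HB Require Import structures.
From mathcomp Require Import all_boot all_order all_algebra all_fingroup.
From mathcomp Require Import all_classical all_reals all_analysis.
Set Implicit Arguments. Unset Strict Implicit. Unset Printing Implicit Defensive.
Import Order.TTheory GRing.Theory Num.Theory.
Import numFieldNormedType.Exports.
Local Open Scope classical_set_scope.
Local Open Scope ring_scope.

Section Defs.
Variable R : realType.
Variable m : nat.

Definition inA (A : seq R) (x : 'I_m -> R) := forall j, x j \in A.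

Definition differ_le1 (x y : 'I_m -> R) := (#|[pred j | x j != y j]| <= 1)%N.

(* An alignment of the words w j (j : 'I_m) of length k: for each j a strictly
   increasing sequence of k (0-based) positions of w j. *)
Definition is_alignment (w : 'I_m -> seq R) (k : nat) (pi : 'I_m -> seq nat) :=
  forall j, [/\ size (pi j) = k, sorted ltn (pi j) & all (fun i => i < size (w j))%N (pi j)].

Definition score (S : ('I_m -> R) -> R) (w : 'I_m -> seq R) (k : nat)
  (pi : 'I_m -> seq nat) : R :=
  \sum_(i < k) S (fun j => nth 0 (w j) (nth 0%N (pi j) i)).

Definition optscore (S : ('I_m -> R) -> R) (w : 'I_m -> seq R) : R :=
  sup [set x | exists k pi, is_alignment w k pi /\ x = score S w k pi].

Variables (dT : measure_display) (T : measurableType dT).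

(* X j i is X^{(j+1)}_{i+1}; word X j a b w = (X^{(j+1)}_i(w))_{i=a+1}^{b} *)
Definition word (X : 'I_m -> nat -> T -> R) (j : 'I_m) (a b : nat) (w : T) : seq R :=
  [seq X j i w | i <- iota a (b - a)].

Definition mutual_indep (P : probability T R) (I : eqType) (Y : I -> T -> R) :=
  forall (J : seq I) (B : I -> set R), uniq J -> (forall i, measurable (B i)) ->
    P (\bigcap_(i in [set` J]) (Y i @^-1` B i)) = (\prod_(i <- J) P (Y i @^-1` B i))%E.

Definition Ln (X : 'I_m -> nat -> T -> R) S (n : nat) (w : T) : R :=
  optscore S (fun j => word X j 0 n w).

Definition gamma_star (P : probability T R) X S : R :=
  limn ((fun n : nat => fine ('E_P[Ln X S n]) / n%:R) : R^nat).

Definition ceil_nat (x : R) : nat := `|Num.ceil x|%N.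

(* the score of X^{(1)}_1..X^{(1)}_n ; X^{(j)}_1..X^{(j)}_{ceil(n p_j)} (j >= 2);
   the first word is the one with index val j = 0, p 0 is ignored *)
Definition Lp (X : 'I_m -> nat -> T -> R) S (p : 'I_m -> R) (n : nat) (w : T) : R :=
  optscore S (fun j => if val j == 0%N then word X j 0 n w
                       else word X j 0 (ceil_nat (n%:R * p j)) w).

Definition gamma_p (P : probability T R) X S (p : 'I_m -> R) : R :=
  limn ((fun n : nat => m%:R * fine ('E_P[Lp X S p n]) /
                        (n%:R * (1 + \sum_(j < m | (0 < val j)%N) p j))) : R^nat).

(* r j k = r^{(j+1)}_k ; component j = 0 is ignored *)
Definition valid_r (n d : nat) (r : 'I_m -> nat -> nat) :=
  forall j : 'I_m, (0 < val j)%N ->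
    [/\ r j 0%N = 0%N, r j d = n & forall k, (k < d)%N -> (r j k <= r j k.+1)%N].

(* summand k here is the (k+1)-th summand of the paper *)
Definition Lr (X : 'I_m -> nat -> T -> R) S (v d : nat) (r : 'I_m -> nat -> nat)
  (w : T) : R :=
  \sum_(k < d) optscore S (fun j => if val j == 0%N then word X j (v * k) (v * k.+1) w
                                    else word X j (r j k) (r j k.+1) w).

Definition in_Rbar (n v d : nat) (eps : R) (p1 p2 : 'I_m -> R) (r : 'I_m -> nat -> nat) :=
  valid_r n d r /\
  (count (fun k => [forall j : 'I_m, (0 < val j)%N ==>
           ((v%:R * p1 j <= (r j k.+1)%:R - (r j k)%:R) &&
            ((r j k.+1)%:R - (r j k)%:R <= v%:R * p2 j))]) (iota 0 d))%:R
    < (1 - eps) * d%:R.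

End Defs.

(* Main.v *)
Require Import Defs.
From HB Require Import structures.
From mathcomp Require Import all_boot all_order all_algebra all_fingroup.
From mathcomp Require Import all_classical all_reals all_analysis.
From mathcomp Require Import lra.
Set Implicit Arguments. Unset Strict Implicit. Unset Printing Implicit Defensive.
Import Order.TTheory GRing.Theory Num.Theory.
Local Open Scope classical_set_scope.
Local Open Scope ring_scope.
From mathcomp Require Import ring.
Import numFieldNormedType.Exports.

Section Comb.
Variable R : realType.
Variable m : nat.
Variable S : ('I_m -> R) -> R.
Variable A : seq R.
Variable M : R.
Hypothesis Hm0 : (0 < m)%N.
Hypothesis S0 : forall x, inA A x -> 0 <= S x.
Hypothesis SM : forall x, inA A x -> S x <= M.
Hypothesis M0 : 0 <= M.
Hypothesis Sperm : forall (s : {perm 'I_m}) x, inA A x -> S (fun j => x (s j)) = S x.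

Definition inAw (w : 'I_m -> seq R) := forall j, all (fun x => x \in A) (w j).

Lemma align_size (w : 'I_m -> seq R) k pi : is_alignment w k pi -> forall j, (k <= size (w j))%N.
Proof.
move=> H j; case: (H j) => sz so al; rewrite -sz -(size_iota 0 (size (w j))).
apply: uniq_leq_size; first exact: (sorted_uniq ltn_trans ltnn so).
by move=> x xp; rewrite mem_iota /= add0n; move/allP: al; apply.
Qed.

Lemma nth_inA w k pi i : inAw w -> is_alignment w k pi -> (i < k)%N ->
  inA A (fun j => nth 0 (w j) (nth 0%N (pi j) i)).
Proof.
move=> wA H ik j; case: (H j) => sz so al.
move/allP: (wA j); apply; apply: mem_nth.
by move/allP: al; apply; apply: mem_nth; rewrite sz.
Qed.

Lemma score_ge0 (w : 'I_m -> seq R) k pi : inAw w -> is_alignment w k pi -> 0 <= score S w k pi.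
Proof.
move=> wA H; rewrite /score; apply: sumr_ge0 => i _; apply: S0.
exact: (nth_inA wA H (ltn_ord i)).
Qed.

Lemma score_le (w : 'I_m -> seq R) k pi : inAw w -> is_alignment w k pi -> score S w k pi <= k%:R * M.
Proof.
move=> wA H; rewrite /score.
apply: (@le_trans _ _ (\sum_(i < k) M)); last by rewrite sumr_const card_ord mulr_natl.
apply: ler_sum => i _; apply: SM; exact: (nth_inA wA H (ltn_ord i)).
Qed.

Definition optset (w : 'I_m -> seq R) := [set x | exists k pi, is_alignment w k pi /\ x = score S w k pi].

Lemma align0 (w : 'I_m -> seq R) : is_alignment w 0 (fun _ => [::]).
Proof. by move=> j; split. Qed.

Lemma optset0 (w : 'I_m -> seq R) : optset w 0.
Proof. exists 0%N, (fun _ => [::]); split; first exact: align0.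
by rewrite /score big_ord0. Qed.

Lemma optset_ub (w : 'I_m -> seq R) (j : 'I_m) : inAw w -> ubound (optset w) ((size (w j))%:R * M).
Proof.
move=> wA x [k [pi [H ->]]]; apply: (le_trans (score_le wA H)).
by rewrite ler_wpM2r // ler_nat; apply: align_size.
Qed.

Lemma optset_has_sup (w : 'I_m -> seq R) : inAw w -> has_sup (optset w).
Proof.
move=> wA; split; first by exists 0; exact: optset0.
by exists ((size (w (Ordinal Hm0)))%:R * M); apply: optset_ub.
Qed.

Lemma optscore_ge (w : 'I_m -> seq R) k pi : inAw w -> is_alignment w k pi -> score S w k pi <= optscore S w.
Proof.
move=> wA H; apply: (sup_upper_bound (optset_has_sup wA)).
by exists k, pi.
Qed.

Lemma optscore_le (w : 'I_m -> seq R) y : (forall k pi, is_alignment w k pi -> score S w k pi <= y) ->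
  optscore S w <= y.
Proof.
move=> H; apply: ge_sup; first by exists 0; exact: optset0.
by move=> x [k [pi [Hk ->]]]; apply: H.
Qed.

Lemma optscore_ge0 (w : 'I_m -> seq R) : inAw w -> 0 <= optscore S w.
Proof.
move=> wA; have := optscore_ge wA (align0 w).
by rewrite /score big_ord0.
Qed.

Lemma optscore_ub (w : 'I_m -> seq R) (j : 'I_m) : inAw w -> optscore S w <= (size (w j))%:R * M.
Proof.
move=> wA; apply: optscore_le => k pi H.
apply: (le_trans (score_le wA H)).
by rewrite ler_wpM2r // ler_nat; apply: align_size.
Qed.

Lemma inAw_cat (w1 w2 : 'I_m -> seq R) : inAw w1 -> inAw w2 -> inAw (fun j => w1 j ++ w2 j).
Proof. by move=> h1 h2 j; rewrite all_cat h1 h2. Qed.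


Lemma sorted_cat_shift (s1 s2 : seq nat) c : sorted ltn s1 -> sorted ltn s2 ->
  all (fun i => (i < c)%N) s1 -> sorted ltn (s1 ++ map (addn c) s2).
Proof.
move=> so1 so2 al1.
rewrite sorted_pairwise; last exact: ltn_trans.
rewrite pairwise_cat pairwise_map.
apply/and3P; split.
- apply/allrelP => x y xp /mapP [z _ ->].
  exact: (leq_trans (allP al1 x xp) (leq_addr _ _)).
- by rewrite -sorted_pairwise //; exact: ltn_trans.
- move: so2; rewrite sorted_pairwise; last exact: ltn_trans.
  by apply: sub_pairwise => a b /=; rewrite ltn_add2l.
Qed.

Lemma align_cat (w1 w2 : 'I_m -> seq R) k1 pi1 k2 pi2 :
  is_alignment w1 k1 pi1 -> is_alignment w2 k2 pi2 ->
  is_alignment (fun j => w1 j ++ w2 j) (k1 + k2)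
    (fun j => pi1 j ++ map (addn (size (w1 j))) (pi2 j)).
Proof.
move=> H1 H2 j; case: (H1 j) => s1 so1 al1; case: (H2 j) => s2 so2 al2; split.
- by rewrite size_cat size_map s1 s2.
- exact: sorted_cat_shift.
- rewrite all_cat; apply/andP; split.
    apply/allP => x xp; have xs := allP al1 x xp.
    by rewrite size_cat (leq_trans xs (leq_addr _ _)).
  apply/allP => x /mapP [z zp ->]; have zs := allP al2 z zp.
  by rewrite size_cat ltn_add2l.
Qed.


Lemma score_cat (w1 w2 : 'I_m -> seq R) k1 pi1 k2 pi2 :
  is_alignment w1 k1 pi1 -> is_alignment w2 k2 pi2 ->
  score S (fun j => w1 j ++ w2 j) (k1 + k2)
    (fun j => pi1 j ++ map (addn (size (w1 j))) (pi2 j)) =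
  score S w1 k1 pi1 + score S w2 k2 pi2.
Proof.
move=> H1 H2; rewrite /score big_split_ord /=.
congr (_ + _); apply: eq_bigr => i _;
  congr S; apply: funext => j; case: (H1 j) => s1 so1 al1; case: (H2 j) => s2 so2 al2.
  rewrite [nth 0%N _ _]nth_cat s1 ltn_ord.
  have hx : (nth 0%N (pi1 j) i < size (w1 j))%N.
    by apply: (allP al1); apply: mem_nth; rewrite s1.
  by rewrite nth_cat hx.
rewrite [nth 0%N _ _]nth_cat s1 /= ltnNge leq_addr /= addKn (nth_map 0%N); last by rewrite s2.
by rewrite nth_cat ltnNge leq_addr /= addKn.
Qed.

Lemma optscore_cat (w1 w2 : 'I_m -> seq R) : inAw w1 -> inAw w2 ->
  optscore S w1 + optscore S w2 <= optscore S (fun j => w1 j ++ w2 j).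
Proof.
move=> h1 h2; set W := fun j => w1 j ++ w2 j.
have hW : inAw W by exact: inAw_cat.
have key : forall k1 pi1 k2 pi2, is_alignment w1 k1 pi1 -> is_alignment w2 k2 pi2 ->
    score S w1 k1 pi1 + score S w2 k2 pi2 <= optscore S W.
  move=> k1 pi1 k2 pi2 Ha Hb; rewrite -(score_cat Ha Hb).
  exact: (optscore_ge hW (align_cat Ha Hb)).
have H2 : forall k2 pi2, is_alignment w2 k2 pi2 -> optscore S w1 <= optscore S W - score S w2 k2 pi2.
  move=> k2 pi2 Hb; apply: optscore_le => k1 pi1 Ha; rewrite lerBrDr; exact: key.
suff : optscore S w2 <= optscore S W - optscore S w1 by lra.
by apply: optscore_le => k2 pi2 Hb; have := H2 _ _ Hb; lra.
Qed.

Lemma optscore_mono (w1 w2 : 'I_m -> seq R) : inAw w1 -> inAw w2 ->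
  optscore S w1 <= optscore S (fun j => w1 j ++ w2 j).
Proof.
move=> h1 h2; apply: le_trans (optscore_cat h1 h2).
by rewrite lerDl; apply: optscore_ge0.
Qed.

Lemma optscore_perm_le (s : {perm 'I_m}) (w : 'I_m -> seq R) : inAw w ->
  optscore S (fun j => w (s j)) <= optscore S w.
Proof.
move=> wA; apply: optscore_le => k pi H.
pose pi' := fun j => pi (s^-1 j)%g.
have H' : is_alignment w k pi'.
  by move=> j; case: (H (s^-1 j)%g); rewrite permKV.
apply: le_trans (optscore_ge wA H'); rewrite /score le_eqVlt; apply/orP; left.
apply/eqP; apply: eq_bigr => i _.
rewrite -(Sperm s (nth_inA wA H' (ltn_ord i))); congr S; apply: funext => j.
by rewrite /pi' permK.
Qed.

Lemma optscore_perm (s : {perm 'I_m}) (w : 'I_m -> seq R) : inAw w ->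
  optscore S (fun j => w (s j)) = optscore S w.
Proof.
move=> wA; apply/le_anti; rewrite optscore_perm_le //=.
have wA' : inAw (fun j => w (s j)) by move=> j; exact: wA.
have := optscore_perm_le (s^-1)%g wA'.
by under eq_fun do rewrite permKV.
Qed.

End Comb.

Section RealAux.
Variable R : realType.

Lemma lim_eps_test (u : R^nat) l : (forall e, 0 < e -> exists N, forall n, (N <= n)%N -> `|u n - l| <= e) -> limn u = l.
Proof.
move=> H; apply: cvg_lim => //; apply/cvgrPdist_le => e e0.
have [N HN] := H e e0.
exists N => // n /= Nn; rewrite distrC; exact: HN.
Qed.
Lemma exnat (x : R) : exists N : nat, x < N%:R.
Proof. exists (Num.bound `|x|); apply: le_lt_trans (archi_boundP (normr_ge0 x)); exact: ler_norm. Qed.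

Lemma fekete (a : nat -> R) C :
  (forall n n', a n + a n' <= a (n + n')%N) -> (forall n, 0 <= a n) ->
  (forall n, a n <= C * n%:R) ->
  exists G, [/\ 0 <= G, (forall n, a n <= G * n%:R) &
    (forall e, 0 < e -> exists N, forall n, (N <= n)%N -> (G - e) * n%:R <= a n)].
Proof.
move=> sup0 a0 aC.
set E := range (fun n => a n.+1 / n.+1%:R).
have hasE : has_sup E.
  split; first by exists (a 1%N / 1%:R); exists 0%N.
  exists C => x [n _ <-]; rewrite ler_pdivrMr ?ltr0n //; exact: aC.
set G := sup E.
have aG : forall n, a n.+1 / n.+1%:R <= G by move=> n; apply: sup_upper_bound => //; exists n.
have G0 : 0 <= G by apply: le_trans (aG 0%N); rewrite divr_ge0.
have mult : forall q k, q%:R * a k <= a (q * k)%N.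
  move=> q k; elim: q => [|q IH]; first by rewrite mul0r mul0n a0.
  rewrite mulSn -natr1 mulrDl mul1r addrC; apply: le_trans (sup0 _ _).
  by rewrite lerD2l.
exists G; split => //.
  case=> [|n]; first by have := aC 0%N; rewrite !mulr0n !mulr0.
  by have := aG n; rewrite ler_pdivrMr ?ltr0n.
move=> e e0.
have e2 : 0 < e / 2 by rewrite divr_gt0.
have [x [k _ <-] Hx] := @sup_adherent _ E (e / 2) e2 hasE.
set K := k.+1 in Hx *.
have K0 : 0 < (K%:R : R) by rewrite ltr0n.
have aK : (G - e / 2) * K%:R < a K by rewrite -ltr_pdivlMr.
have [N HN] := exnat (K%:R * G / (e / 2)).
exists N => n Nn.
have [Ge | Ge] := lerP (G - e / 2) 0.
  apply: le_trans (a0 n); apply: mulr_le0_ge0; [lra | exact: ler0n].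
set q := (n %/ K)%N; set r := (n %% K)%N.
have nqr : n = (q * K + r)%N by rewrite /q /r -divn_eq.
have rK : (r < K)%N by rewrite /r ltn_mod.
have an : q%:R * a K <= a n.
  rewrite nqr; apply: le_trans (mult q K) _; apply: le_trans (sup0 _ _).
  by rewrite lerDl a0.
have nR : (n%:R : R) <= (q * K)%:R + K%:R.
  by rewrite nqr natrD lerD2l ler_nat ltnW.
have NR : (N%:R : R) <= n%:R by rewrite ler_nat.
have HN' : K%:R * G < N%:R * (e / 2).
  by rewrite -ltr_pdivrMr.
rewrite natrM in nR.
have q0 : 0 <= (q%:R : R) by rewrite ler0n.
apply: le_trans an.
have h1 : q%:R * ((G - e / 2) * K%:R) <= q%:R * a K by rewrite ler_wpM2l // ltW.
apply: le_trans h1.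
nra.
Qed.

Lemma sandwich (g f : nat -> R) G v : (0 < v)%N -> 0 <= G -> (forall t, 0 <= g t) ->
  (forall t, g t <= G * t%:R) ->
  (forall e, 0 < e -> exists N, forall t, (N <= t)%N -> (G - e) * t%:R <= g t) ->
  (forall n, g (n %/ v)%N <= f n /\ f n <= g (n %/ v).+1) ->
  forall e, 0 < e -> exists N, forall n, (N <= n)%N -> `|f n / n%:R - G / v%:R| <= e.
Proof.
move=> v0 G0 g0 gG gL fg e e0.
have vr0 : 0 < (v%:R : R) by rewrite ltr0n.
set y := G / v%:R.
have Gy : G = y * v%:R by rewrite /y divfK // gt_eqF.
have y0 : 0 <= y by rewrite divr_ge0 // ltW.
have e2 : 0 < e * v%:R / 2 by rewrite divr_gt0 // mulr_gt0.
have [T0 HT0] := gL _ e2.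
have [N1 HN1] := exnat (G / (e / 2)).
exists (maxn (maxn N1 1) (T0 * v)) => n; rewrite !geq_max => /andP [/andP [N1n n1] T0n].
set t := (n %/ v)%N.
have tv : t%:R * v%:R <= n%:R :> R by rewrite -natrM ler_nat leq_trunc_div.
have nlt : n%:R < (t%:R + 1) * v%:R :> R by rewrite natr1 -natrM ltr_nat ltn_ceil.
have tT : (T0 <= t)%N by rewrite /t leq_divRL.
have nr0 : 0 < (n%:R : R) by rewrite ltr0n.
have Gn : G < n%:R * (e / 2).
  have h : G / (e / 2) < n%:R by apply: lt_le_trans HN1 _; rewrite ler_nat.
  by rewrite -ltr_pdivrMr // divr_gt0.
have [f1 f2] := fg n.
have gt1 := gG t.+1; rewrite -natr1 in gt1.
have gt := HT0 t tT.
have g0t := g0 t.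
have t0 : 0 <= (t%:R : R) by rewrite ler0n.
have up : f n <= (e + y) * n%:R.
  apply: le_trans f2 _; apply: le_trans gt1 _; rewrite Gy; nra.
have low : (- e + y) * n%:R <= f n.
  have [Ge | Ge] := lerP (G - e * v%:R / 2) 0.
    apply: le_trans (le_trans (g0 _) f1).
    have : y <= e / 2.
      rewrite Gy in Ge; nra.
    nra.
  apply: le_trans f1; apply: le_trans gt; rewrite Gy in Ge Gn *.
  nra.
rewrite ler_norml; apply/andP; split.
  by rewrite lerBrDr ler_pdivlMr.
by rewrite lerBlDr ler_pdivrMr.
Qed.

End RealAux.

Section Prob.
Variables (R : realType) (dT : measure_display) (T : measurableType dT).
Variables (P : probability T R) (m : nat) (A : seq R) (X : 'I_m -> nat -> T -> R).
Hypothesis Hm0 : (0 < m)%N.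
Hypothesis mX : forall j i, measurable_fun setT (X j i).
Hypothesis XA : forall j i w, X j i w \in A.
Hypothesis Xind : mutual_indep P (fun ji : 'I_m * nat => X ji.1 ji.2).
Hypothesis Xid : forall j i j' i' (B : set R), measurable B ->
      P (X j i @^-1` B) = P (X j' i' @^-1` B).

Let i0 : 'I_m := Ordinal Hm0.
Definition Qp (a : R) : \bar R := P (X i0 0%N @^-1` [set a]).

Fixpoint allseqs (n : nat) : seq (seq R) :=
  if n is n'.+1 then [seq a :: s | a <- undup A, s <- allseqs n'] else [:: [::]].

Lemma mem_allseqs n s : (s \in allseqs n) = (size s == n) && all (fun a => a \in A) s.
Proof.
elim: n s => [|n IH] [|a s] //=.
- by apply/allpairsP => [[[b t] /= [_ _]]].
- apply/allpairsP/idP => [[[b t]] /= [bA tn [-> ->]] | ].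
    by move: bA tn; rewrite mem_undup IH eqSS => -> /andP[-> ->].
  rewrite eqSS => /andP [sn /andP [aA sA]]; exists (a, s).
  by rewrite /= mem_undup aA IH sn sA.
Qed.

Lemma allseqs_uniq n : uniq (allseqs n).
Proof.
elim: n => //= n IH; apply: allpairs_uniq => //; first exact: undup_uniq.
by move=> [a s] [b t] _ _ /= [-> ->].
Qed.

Definition YJ (J : seq ('I_m * nat)) (w : T) : seq R := [seq X ji.1 ji.2 w | ji <- J].
Definition Yset J x := [set w | YJ J w = x].

Lemma YJ_allseqs J w : YJ J w \in allseqs (size J).
Proof.
rewrite mem_allseqs size_map eqxx /=; apply/allP => a /mapP [ji _ ->]; exact: XA.
Qed.

Lemma Yset_meas J x : measurable (Yset J x).
Proof.
elim: J x => [|ji J IH] [|a x].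
- by have -> : Yset [::] [::] = setT by apply/seteqP; split.
- by have -> : Yset [::] (a :: x) = set0 by apply/seteqP; split.
- by have -> : Yset (ji :: J) [::] = set0 by apply/seteqP; split.
- have -> : Yset (ji :: J) (a :: x) = X ji.1 ji.2 @^-1` [set a] `&` Yset J x.
    apply/seteqP; split => w /=; rewrite /Yset /=.
      by case => -> ->.
    by case => -> ->.
  apply: measurableI; last exact: IH.
  by have := mX ji.1 ji.2 measurableT (measurable_set1 a); rewrite setTI.
Qed.

Lemma Yset_eq J x : uniq J -> size x = size J ->
  Yset J x = \bigcap_(i in [set` J])
     ((fun ji : 'I_m * nat => X ji.1 ji.2) i @^-1` [set nth 0 x (index i J)]).
Proof.
move=> uJ sx; apply/seteqP; split => w /=.
  move=> <- i /= iJ; rewrite /YJ (nth_map (i0, 0%N)) ?index_mem //.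
  by rewrite nth_index.
move=> H; apply: (@eq_from_nth _ 0); first by rewrite size_map.
move=> k; rewrite size_map => kJ; rewrite (nth_map (i0, 0%N)) //.
by have := H (nth (i0, 0%N) J k) (mem_nth _ kJ); rewrite /= index_uniq // -sx.
Qed.

Lemma Yset_prob J x : uniq J -> size x = size J ->
  P (Yset J x) = (\prod_(a <- x) Qp a)%E.
Proof.
move=> uJ sx; rewrite Yset_eq // Xind //.
have ex : x = map (fun i => nth 0 x (index i J)) J.
  apply: (@eq_from_nth _ 0); rewrite ?size_map // => k kx.
  by rewrite (nth_map (i0, 0%N)) -?sx // index_uniq // -sx.
rewrite [in RHS]ex big_map; apply: eq_bigr => i _; rewrite /Qp; apply: Xid; exact: measurable_set1.
Qed.

Definition EN (n : nat) (G : seq R -> R) : \bar R :=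
  (\sum_(x <- allseqs n) (G x)%:E * \prod_(a <- x) Qp a)%E.

Lemma G_decomp J (G : seq R -> R) : (fun w => G (YJ J w)) =
  \sum_(x <- allseqs (size J)) (fun w => \1_(Yset J x) w * G x).
Proof.
rewrite fct_sumE; apply: funext => w.
rewrite (bigD1_seq (YJ J w)) /= ?allseqs_uniq ?YJ_allseqs //.
rewrite indicE mem_set // mul1r big1 ?addr0 // => x xne.
rewrite indicE memNset ?mul0r //= => hyp; move: xne; rewrite hyp eqxx.
by [].
Qed.

Lemma EG J (G : seq R -> R) : uniq J ->
  (fun w => G (YJ J w)) \in Lfun P 1 /\ ('E_P[fun w => G (YJ J w)] = EN (size J) G)%E.
Proof.
move=> uJ.
have Lind : forall x, (fun w => \1_(Yset J x) w * G x) \in Lfun P 1.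
  move=> x; apply: (@Lfun_scale _ _ _ P (\1_(Yset J x)) (G x) 1) => //.
  by apply/Lfun1_integrable; exact: (integrable_indic P (Yset_meas J x)).
rewrite G_decomp; split.
  by rewrite big_seq; apply: rpred_sum => x _; exact: Lind.
set F := fun x => (fun w => \1_(Yset J x) w * G x).
have -> : \sum_(x <- allseqs (size J)) F x = \sum_(Xi <- map F (allseqs (size J))) Xi.
  by rewrite big_map.
rewrite expectation_sum; last by move=> Xi /mapP [x _ ->]; exact: Lind.
rewrite big_map /EN big_seq [RHS]big_seq; apply: eq_bigr => x xin.
rewrite /F.
have -> : (fun w => \1_(Yset J x) w * G x) = G x \o* \1_(Yset J x) by [].
rewrite expectationZl; last first.
  by apply/Lfun1_integrable; exact: (integrable_indic P (Yset_meas J x)).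
rewrite expectation_indic; last exact: Yset_meas.
rewrite Yset_prob //.
by move: xin; rewrite mem_allseqs => /andP [/eqP -> _].
Qed.

Variables (S : ('I_m -> R) -> R) (M : R).
Hypothesis S0 : forall x, inA A x -> 0 <= S x.
Hypothesis SM : forall x, inA A x -> S x <= M.
Hypothesis M0 : 0 <= M.
Hypothesis Sperm : forall (s : {perm 'I_m}) x, inA A x -> S (fun j => x (s j)) = S x.

Definition blk (a c : 'I_m -> nat) (w : T) : R :=
  optscore S (fun j => word X j (a j) (a j + c j) w).

Definition Jt (tau : 'I_m -> 'I_m) (a c : 'I_m -> nat) : seq ('I_m * nat) :=
  [seq (tau j, a j + i)%N | j <- enum 'I_m, i <- iota 0 (c j)].

Definition Gc (c : 'I_m -> nat) (s : seq R) : R :=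
  optscore S (fun j => nth [::] (reshape [seq c j | j <- enum 'I_m] s) j).

Lemma word_inAw (f : 'I_m -> 'I_m) (a b : 'I_m -> nat) w :
  inAw A (fun j => word X (f j) (a j) (b j) w).
Proof. by move=> j; apply/allP => x /mapP [i _ ->]; exact: XA. Qed.

Lemma rep (tau : 'I_m -> 'I_m) (a c : 'I_m -> nat) w :
  optscore S (fun j => word X (tau j) (a j) (a j + c j) w) = Gc c (YJ (Jt tau a c) w).
Proof.
rewrite /Gc; congr optscore; apply: funext => j.
set W := fun j => word X (tau j) (a j) (a j + c j) w.
have -> : YJ (Jt tau a c) w = flatten [seq W j | j <- enum 'I_m].
  rewrite /YJ /Jt /allpairs_dep map_flatten -map_comp; congr flatten.
  apply: eq_map => k /=; rewrite /W /word addKn.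
  have -> : iota (a k) (c k) = map (addn (a k)) (iota 0 (c k)) by rewrite -iotaDl addn0.
  by rewrite -!map_comp; apply: eq_map.
have -> : [seq c j | j <- enum 'I_m] = shape [seq W j | j <- enum 'I_m].
  rewrite /shape -map_comp; apply: eq_map => k /=.
  by rewrite /W /word size_map size_iota addKn.
rewrite flattenK (nth_map j) ?size_enum_ord ?ltn_ord //.
by rewrite nth_ord_enum.
Qed.

Lemma Jt_uniq (tau : 'I_m -> 'I_m) (a c : 'I_m -> nat) : injective tau -> uniq (Jt tau a c).
Proof.
move=> itau; apply: allpairs_uniq_dep; first exact: enum_uniq.
  by move=> k _; exact: iota_uniq.
move=> [k i] [k' i'] _ _ /= [/itau e].
move: i'; rewrite -e => i' /addnI e2; congr existT; exact: e2.
Qed.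

Lemma size_Jt (tau tau' : 'I_m -> 'I_m) (a a' c : 'I_m -> nat) :
  size (Jt tau a c) = size (Jt tau' a' c).
Proof. by rewrite /Jt !size_allpairs_dep. Qed.

Lemma E_le (f g : T -> R) : f \in Lfun P 1 -> g \in Lfun P 1 -> (forall w, f w <= g w) ->
  fine 'E_P[f] <= fine 'E_P[g].
Proof.
move=> Lf Lg fg.
have h : (0 <= 'E_P[g \- f])%E by apply: expectation_ge0 => w; rewrite subr_ge0.
move: h; rewrite expectationB //.
rewrite -(fineK (expectation_fin_num Lf)) -(fineK (expectation_fin_num Lg)).
by rewrite -EFinB lee_fin subr_ge0.
Qed.

Definition Phi (c : 'I_m -> nat) : R := fine 'E_P[blk (fun _ => 0%N) c].

Lemma blk_rep a c : blk a c = (fun w => Gc c (YJ (Jt (fun j => j) a c) w)).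
Proof. by apply: funext => w; rewrite /blk -rep. Qed.

Lemma blk_EL a c : blk a c \in Lfun P 1 /\ ('E_P[blk a c] = (Phi c)%:E)%E.
Proof.
have iid : injective (fun j : 'I_m => j) by [].
have [L1 E1] := EG (Gc c) (Jt_uniq a c iid).
have [L0 E0] := EG (Gc c) (Jt_uniq (fun _ => 0%N) c iid).
rewrite /Phi !blk_rep; split => //.
rewrite E1 (size_Jt _ (fun j => j) _ (fun _ => 0%N)) -E0 fineK //.
exact: expectation_fin_num.
Qed.

Lemma blk_E a c : ('E_P[blk a c] = (Phi c)%:E)%E.
Proof. by case: (blk_EL a c). Qed.

Lemma blk_L a c : blk a c \in Lfun P 1.
Proof. by case: (blk_EL a c). Qed.

Lemma Phi_perm (s : {perm 'I_m}) c : Phi (fun j => c (s j)) = Phi c.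
Proof.
have e : blk (fun _ => 0%N) c =
    (fun w => Gc (fun j => c (s j)) (YJ (Jt s (fun _ => 0%N) (fun j => c (s j))) w)).
  apply: funext => w; rewrite /blk -rep.
  symmetry; exact: (optscore_perm Hm0 SM M0 Sperm s (word_inAw (fun j => j) (fun _ => 0%N) (fun j => 0 + c j)%N w)).
have [L1 E1] := EG (Gc (fun j => c (s j))) (Jt_uniq (fun _ => 0%N) (fun j => c (s j)) (@perm_inj _ s)).
rewrite /Phi [in RHS]e E1 (size_Jt _ (fun j => j) _ (fun _ => 0%N)).
have [L0 E0] := EG (Gc (fun j => c (s j))) (Jt_uniq (fun _ => 0%N) (fun j => c (s j)) (fun x y (h : x = y) => h)).
by rewrite -E0 -blk_rep.
Qed.

Lemma Phi_ge0 c : 0 <= Phi c.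
Proof.
rewrite /Phi fine_ge0 //; apply: expectation_ge0 => w.
exact: (optscore_ge0 Hm0 SM M0 (word_inAw _ _ _ w)).
Qed.

Lemma Phi_ub c j : Phi c <= (c j)%:R * M.
Proof.
have := @E_le (blk (fun _ => 0%N) c) (cst ((c j)%:R * M)) (blk_L _ _) (Lfun_cst P _ 1).
rewrite expectation_cst /=; apply => w.
apply: le_trans (optscore_ub SM M0 j (word_inAw (fun j => j) _ _ w)) _.
by rewrite /word size_map size_iota addKn.
Qed.

Lemma word_cat j a b d w : (a <= b)%N -> (b <= d)%N ->
  word X j a b w ++ word X j b d w = word X j a d w.
Proof.
move=> ab bd; rewrite /word -map_cat.
have -> : (d - a = (b - a) + (d - b))%N by rewrite addnC addnBA // subnK.
by rewrite iotaD subnKC.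
Qed.

Lemma Phi_add c c' : Phi c + Phi c' <= Phi (fun j => c j + c' j)%N.
Proof.
have L : blk (fun _ => 0%N) c \+ blk c c' \in Lfun P 1 by apply: rpredD; apply: blk_L.
have := @E_le _ (blk (fun _ => 0%N) (fun j => c j + c' j)%N) L (blk_L _ _).
rewrite expectationD ?blk_L // !blk_E /=; apply => w.
rewrite /blk.
have := optscore_cat Hm0 SM M0 (word_inAw (fun j => j) (fun _ => 0%N) (fun j => 0 + c j)%N w)
   (word_inAw (fun j => j) c (fun j => c j + c' j)%N w).
have -> // : (fun j => word X j 0 (0 + c j) w ++ word X j (c j) (c j + c' j) w) =
   (fun j => word X j 0 (0 + (c j + c' j)) w).
by apply: funext => j; rewrite !add0n word_cat ?leq_addr.
Qed.

Lemma Phi_mono c c' : (forall j, (c j <= c' j)%N) -> Phi c <= Phi c'.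
Proof.
move=> cc; have := Phi_add c (fun j => c' j - c j)%N.
have -> : (fun j => c j + (c' j - c j))%N = c' by apply: funext => j; rewrite subnKC.
by move=> h; apply: le_trans h; rewrite lerDl Phi_ge0.
Qed.

Lemma Phi_zero c j : c j = 0%N -> Phi c = 0.
Proof.
move=> cj; apply/le_anti; rewrite Phi_ge0 andbT.
by have := Phi_ub c j; rewrite cj mul0r.
Qed.

Lemma Phi_bigadd (cs : seq ('I_m -> nat)) :
  \sum_(c <- cs) Phi c <= Phi (fun j => \sum_(c <- cs) c j)%N.
Proof.
elim: cs => [|c cs IH]; first by rewrite big_nil Phi_ge0.
rewrite big_cons; apply: le_trans (lerD (lexx _) IH) _.
apply: le_trans (Phi_add _ _) _.
by apply: Phi_mono => j; rewrite big_cons.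
Qed.

Definition rot (k : 'I_m) : 'I_m -> 'I_m := fun j => Ordinal (ltn_pmod (j + k)%N Hm0).

Lemma rot_inj k : injective (rot k).
Proof.
move=> x y /(congr1 val) /= /eqP; rewrite eqn_modDr !modn_small // => /eqP e.
exact: val_inj.
Qed.

Lemma rot_inj2 j : injective (fun k => rot k j).
Proof.
move=> x y /(congr1 val) /= /eqP; rewrite eqn_modDl !modn_small // => /eqP e.
exact: val_inj.
Qed.

Definition rotp (k : 'I_m) : {perm 'I_m} := perm (@rot_inj k).

Lemma Phi_sym c : m%:R * Phi c <= Phi (fun _ => \sum_(i < m) c i)%N.
Proof.
have e1 : \sum_(k <- enum 'I_m) Phi (fun j => c (rotp k j)) = m%:R * Phi c.
  under eq_bigr do rewrite Phi_perm.
  by rewrite big_enum /= sumr_const card_ord mulr_natl.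
rewrite -e1.
have := Phi_bigadd [seq (fun j => c (rotp k j)) | k <- enum 'I_m].
rewrite big_map; move/le_trans; apply.
apply: Phi_mono => j; rewrite big_map big_enum /=; apply: eq_leq.
rewrite [RHS](reindex_inj (@rot_inj2 j)) /=; apply: eq_big => // k _.
by rewrite permE.
Qed.

Lemma ceil_nat_ge k (x : R) : k%:R <= x -> (k <= ceil_nat x)%N.
Proof.
move=> kx; have h : (k%:Z <= Num.ceil x)%R.
  by rewrite -(@intrKceil R k%:Z); apply: le_ceil; rewrite -pmulrn.
rewrite /ceil_nat; move: h; case: (Num.ceil x) => [n|n] //=.
all: by rewrite lez_nat.
Qed.

Lemma ceil_nat_le k (x : R) : 0 <= x -> x <= k%:R -> (ceil_nat x <= k)%N.
Proof.
move=> x0 xk; have h : (Num.ceil x <= k%:Z)%R by rewrite ceil_le_int -pmulrn.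
have h0 : (0 <= Num.ceil x)%R by rewrite ceil_ge0; apply: lt_le_trans x0; rewrite ltrN10.
rewrite /ceil_nat; move: h h0; case: (Num.ceil x) => [n|n] //=.
all: by rewrite lez_nat.
Qed.

Lemma Ln_blk n : Ln X S n = blk (fun _ => 0%N) (fun _ => n).
Proof. by []. Qed.

Lemma gstar : exists G, [/\ gamma_star P X S = G, 0 <= G,
  (forall n, Phi (fun _ => n) <= G * n%:R) &
  (forall e, 0 < e -> exists N, forall n, (N <= n)%N -> (G - e) * n%:R <= Phi (fun _ => n))].
Proof.
have ub : forall n, Phi (fun _ => n) <= M * n%:R by move=> n; rewrite mulrC; apply: (Phi_ub _ i0).
have [G [G0 HG1 HG2]] := @fekete _ (fun n => Phi (fun _ => n)) M
  (fun n n' => Phi_add (fun _ => n) (fun _ => n')) (fun n => Phi_ge0 _) ub.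
exists G; split => //.
rewrite /gamma_star; apply: lim_eps_test => e e0.
have [N HN] := HG2 e e0.
exists (maxn N 1) => n; rewrite geq_max => /andP [Nn n1].
have nr0 : 0 < (n%:R : R) by rewrite ltr0n.
rewrite Ln_blk blk_E /= ler_norml; apply/andP; split.
  by rewrite lerBrDr ler_pdivlMr // addrC; apply: HN.
rewrite lerBlDr ler_pdivrMr //; apply: le_trans (HG1 n) _; nra.
Qed.

Lemma gp (c : 'I_m -> nat) : (0 < c i0)%N ->
  m%:R * Phi c / (\sum_(j < m) c j)%:R <= gamma_p P X S (fun j => (c j)%:R / (c i0)%:R).
Proof.
move=> v0; set v := c i0; set p := fun j => (c j)%:R / v%:R.
have vr0 : 0 < (v%:R : R) by rewrite ltr0n.
have gadd : forall t t', Phi (fun j => t * c j)%N + Phi (fun j => t' * c j)%N <=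
    Phi (fun j => (t + t') * c j)%N.
  move=> t t'; have -> : (fun j => (t + t') * c j)%N = (fun j => t * c j + t' * c j)%N.
    by apply: funext => j; rewrite mulnDl.
  exact: Phi_add.
have gub : forall t, Phi (fun j => t * c j)%N <= (v%:R * M) * t%:R.
  by move=> t; apply: le_trans (Phi_ub _ i0) _; rewrite natrM; lra.
have [G [G0 HG1 HG2]] := @fekete _ (fun t => Phi (fun j => t * c j)%N) _ gadd (fun t => Phi_ge0 _) gub.
have g1 : Phi c <= G.
  have := HG1 1%N; rewrite mulr1.
  by have -> : (fun j => 1 * c j)%N = c by apply: funext => j; rewrite mul1n.
set cn := fun n (j : 'I_m) => if val j == 0%N then n else ceil_nat (n%:R * p j).
have Lp_eq : forall n, Lp X S p n = blk (fun _ => 0%N) (cn n).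
  move=> n; apply: funext => w; rewrite /Lp /blk; congr optscore; apply: funext => j.
  by rewrite /cn; case: ifP.
have fb : forall n, Phi (fun j => (n %/ v) * c j)%N <= Phi (cn n) /\
                    Phi (cn n) <= Phi (fun j => (n %/ v).+1 * c j)%N.
  move=> n; set t := (n %/ v)%N.
  have tv : t%:R * v%:R <= n%:R :> R by rewrite -natrM ler_nat leq_trunc_div.
  have nlt : n%:R <= (t%:R + 1) * v%:R :> R.
    by rewrite natr1 -natrM ler_nat ltnW // ltn_ceil.
  have cj0 : forall j, 0 <= ((c j)%:R : R) by move=> j; rewrite ler0n.
  split; apply: Phi_mono => j; rewrite /cn; case: ifP => [/eqP j0|_].
  - have -> : j = i0 by apply: val_inj.
    exact: leq_trunc_div.
  - apply: ceil_nat_ge; rewrite /p mulrA ler_pdivlMr // natrM.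
    have := cj0 j; nra.
  - have -> : j = i0 by apply: val_inj.
    exact: ltnW (ltn_ceil _ _).
  - apply: ceil_nat_le.
      by rewrite /p mulr_ge0 // divr_ge0.
    rewrite /p mulrA ler_pdivrMr // natrM -natr1.
    have := cj0 j; nra.
have sw := @sandwich _ (fun t => Phi (fun j => t * c j)%N) (fun n => Phi (cn n)) G v v0 G0
   (fun t => Phi_ge0 _) HG1 HG2 fb.
set K := 1 + \sum_(j < m | (0 < val j)%N) p j.
have K0 : 0 < K.
  by rewrite /K ltr_pwDl // sumr_ge0 // => j _; rewrite /p divr_ge0.
have vK : v%:R * K = (\sum_(j < m) c j)%:R.
  rewrite natr_sum (bigD1 i0) //= /K mulrDr mulr1 mulr_sumr; congr (_ + _).
  apply: eq_big => [j|j _]; last by rewrite /p mulrC divfK // gt_eqF.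
  by rewrite -val_eqE /= lt0n.
have lim : gamma_p P X S p = m%:R * G / (v%:R * K).
  rewrite /gamma_p; apply: lim_eps_test => e e0.
  have m0 : 0 < (m%:R : R) by rewrite ltr0n.
  have [N HN] := sw (e * K / m%:R) (divr_gt0 (mulr_gt0 e0 K0) m0).
  exists (maxn N 1) => n; rewrite geq_max => /andP [Nn n1].
  have nr0 : 0 < (n%:R : R) by rewrite ltr0n.
  have := HN n Nn; rewrite /= Lp_eq blk_E /= -/K.
  have -> : m%:R * Phi (cn n) / (n%:R * K) - m%:R * G / (v%:R * K) =
      (m%:R / K) * (Phi (cn n) / n%:R - G / v%:R).
    field; rewrite !gt_eqF //.
  rewrite normrM ger0_norm; last by rewrite divr_ge0 // ltW.
  move=> h; apply: le_trans (ler_wpM2l _ h) _; first by rewrite divr_ge0 // ltW.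
  rewrite le_eqVlt; apply/orP; left; apply/eqP; field; rewrite !gt_eqF //.
rewrite lim -vK.
rewrite ler_pdivrMr ?mulr_gt0 // divfK ?gt_eqF ?mulr_gt0 //.
by rewrite ler_wpM2l // ler0n.
Qed.

Lemma E_Lr (d : nat) (a c : nat -> 'I_m -> nat) (c0 : 'I_m -> nat) :
  ('E_P[(fun w => \sum_(k < d) blk (a k) (c k) w - blk (fun _ => 0%N) c0 w)%R] =
    (\sum_(k < d) Phi (c k) - Phi c0)%:E)%E.
Proof.
have e : (fun w => \sum_(k < d) blk (a k) (c k) w) =
    \sum_(F <- [seq blk (a k) (c k) | k : 'I_d <- index_enum 'I_d]) F.
  by rewrite big_map fct_sumE.
have LF : forall F, F \in [seq blk (a k) (c k) | k : 'I_d <- index_enum 'I_d] -> F \in Lfun P 1.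
  by move=> F /mapP [k _ ->]; exact: blk_L.
have Ls : (fun w => \sum_(k < d) blk (a k) (c k) w) \in Lfun P 1.
  by rewrite e big_seq; apply: rpred_sum => F; exact: LF.
have := expectationB Ls (blk_L (fun _ => 0%N) c0).
move=> ->; rewrite e expectation_sum // big_map blk_E.
under eq_bigr do rewrite blk_E.
by rewrite sumEFin EFinB.
Qed.

Lemma main_sec (eps delta eta : R) (p1 p2 : 'I_m -> R) :
  0 < eps -> 0 < delta < gamma_star P X S ->
  (forall p : 'I_m -> R, (forall j : 'I_m, (0 < val j)%N -> 0 < p j) ->
      (exists j : 'I_m, (0 < val j)%N /\ ~ (p1 j <= p j <= p2 j)) ->
      gamma_p P X S p <= delta) ->
  0 < eta < gamma_star P X S - delta ->
  exists N : nat, forall n : nat, (N <= n)%N ->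
    forall v d : nat, (0 < v)%N -> (0 < d)%N -> n = (v * d)%N ->
    forall r : 'I_m -> nat -> nat, in_Rbar n v d eps p1 p2 r ->
    ('E_P[(fun w => Lr X S v d r w - Ln X S n w)%R]
       <= (- (eta * eps * n%:R / m%:R))%R%:E)%E.
Proof.
move=> eps0 /andP [dl0 dG] Hgp /andP [e0 eG].
have [G [gG G0 G1 G2]] := gstar.
rewrite gG in dG eG.
have m0 : 0 < (m%:R : R) by rewrite ltr0n.
set xi := (G - delta - eta) * eps / m%:R.
have xi0 : 0 < xi by rewrite /xi divr_gt0 // mulr_gt0 //; lra.
have [N HN] := G2 xi xi0.
exists N => n Nn v d v0 d0 nvd r [vr cnt].
pose a := fun k (j : 'I_m) => if val j == 0%N then (v * k)%N else r j k.
pose c := fun k (j : 'I_m) => if val j == 0%N then v else (r j k.+1 - r j k)%N.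
have mono : forall j : 'I_m, (0 < val j)%N -> forall k, (k < d)%N -> (r j k <= r j k.+1)%N.
  by move=> j j0 k kd; case: (vr j j0) => _ _; apply.
have Lr_eq : Lr X S v d r = fun w => \sum_(k < d) blk (a k) (c k) w.
  apply: funext => w; rewrite /Lr; apply: eq_bigr => k _; rewrite /blk; congr optscore.
  apply: funext => j; rewrite /a /c; case: ifP => j0; first by rewrite mulnSr.
  by rewrite subnKC // mono // lt0n j0.
rewrite Lr_eq Ln_blk E_Lr lee_fin.
set inb := fun k : nat => [forall j : 'I_m, (0 < val j)%N ==>
           (v%:R * p1 j <= (r j k.+1)%:R - (r j k)%:R) &&
           ((r j k.+1)%:R - (r j k)%:R <= v%:R * p2 j)].
set Tk := fun k => (\sum_(j < m) c k j)%N.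
have ci0 : forall k, c k i0 = v by move=> k; rewrite /c /=.
have cj : forall k, (k < d)%N -> forall j : 'I_m, (0 < val j)%N ->
    (c k j)%:R = (r j k.+1)%:R - (r j k)%:R :> R.
  move=> k kd j j0; rewrite /c; case: ifP => [/eqP h|_]; first by move: j0; rewrite h.
  by rewrite natrB // mono.
have Tv : forall k, (v <= Tk k)%N.
  by move=> k; rewrite /Tk (bigD1 i0) //= ci0 leq_addr.
have B1 : forall k, m%:R * Phi (c k) <= G * (Tk k)%:R.
  by move=> k; apply: le_trans (Phi_sym (c k)) _; exact: G1.
rewrite -/inb in cnt.
have B2 : forall k, (k < d)%N -> ~~ inb k -> m%:R * Phi (c k) <= delta * (Tk k)%:R.
  move=> k kd; move/forallPn => [j]; rewrite negb_imply => /andP [j0 nin].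
  have T0 : 0 <= ((Tk k)%:R : R) by rewrite ler0n.
  case: (boolP [exists j', (0 < val j')%N && (c k j' == 0%N)]).
    move/existsP => [j' /andP [_ /eqP cz]]; rewrite (Phi_zero cz) mulr0.
    by rewrite mulr_ge0 // ltW.
  rewrite negb_exists => /forallP nz.
  have cpos : forall j', (0 < val j')%N -> (0 < c k j')%N.
    move=> j' j0'; rewrite lt0n; have := nz j'; by rewrite j0'.
  have Tpos : 0 < ((Tk k)%:R : R) by rewrite ltr0n (leq_trans v0 (Tv k)).
  have ck0 : (0 < c k i0)%N by rewrite ci0.
  have hg := gp ck0.
  have vr0 : 0 < (v%:R : R) by rewrite ltr0n.
  have hd : gamma_p P X S (fun j => (c k j)%:R / (c k i0)%:R) <= delta.
    apply: Hgp.
      by move=> j' j0'; rewrite divr_gt0 // ltr0n ?ci0 // cpos.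
    exists j; split => //; rewrite ci0 (cj k kd j j0) => /andP [h1 h2].
    move/negP: nin; apply; apply/andP; split.
      by rewrite mulrC -ler_pdivlMr.
    by rewrite mulrC -ler_pdivrMr.
  by have := le_trans hg hd; rewrite ler_pdivrMr.
have colsum : forall j : 'I_m, \sum_(k < d) ((c k j)%:R : R) = n%:R.
  move=> j; case: (boolP (val j == 0%N)) => j0.
    have -> : \sum_(k < d) ((c k j)%:R : R) = \sum_(k < d) (v%:R : R).
      by apply: eq_bigr => k _; rewrite /c j0.
    by rewrite sumr_const card_ord nvd natrM mulr_natr.
  have jp : (0 < val j)%N by rewrite lt0n.
  have -> : \sum_(k < d) ((c k j)%:R : R) = \sum_(k < d) ((r j k.+1)%:R - (r j k)%:R).
    by apply: eq_bigr => k _; rewrite cj.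
  rewrite -(big_mkord xpredT (fun k => (r j k.+1)%:R - (r j k)%:R)) telescope_sumr //.
  by case: (vr j jp) => -> -> _; rewrite subr0.
have B3 : \sum_(k < d) ((Tk k)%:R : R) = m%:R * n%:R.
  rewrite /Tk; under eq_bigr do rewrite natr_sum.
  rewrite exchange_big /=; under eq_bigr do rewrite colsum.
  by rewrite sumr_const card_ord mulr_natl.
have cntE : (count inb (iota 0 d))%:R = \sum_(k < d | inb k) (1 : R).
  rewrite -sum1_count natr_sum.
  have -> : iota 0 d = index_iota 0 d by rewrite /index_iota subn0.
  by rewrite big_mkord; apply: eq_bigr => k _; rewrite mulr1n.
have dsum : \sum_(k < d | inb k) (1 : R) + \sum_(k < d | ~~ inb k) 1 = d%:R.
  have -> : (d%:R : R) = \sum_(k < d) (1 : R) by rewrite sumr_const card_ord.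
  by rewrite [RHS](bigID (fun k : 'I_d => inb k)).
have outv : v%:R * \sum_(k < d | ~~ inb k) (1 : R) <= \sum_(k < d | ~~ inb k) ((Tk k)%:R : R).
  by rewrite mulr_sumr; apply: ler_sum => k _; rewrite mulr1 ler_nat Tv.
have B4 : eps * n%:R <= \sum_(k < d | ~~ inb k) ((Tk k)%:R : R).
  apply: le_trans outv; rewrite nvd natrM.
  rewrite cntE in cnt.
  have v0r : 0 <= (v%:R : R) by rewrite ler0n.
  nra.
have S1 : m%:R * \sum_(k < d) Phi (c k) <= G * (m%:R * n%:R) - (G - delta) * (eps * n%:R).
  have h : m%:R * \sum_(k < d) Phi (c k) <=
      \sum_(k < d) (G * (Tk k)%:R - (if ~~ inb k then (G - delta) * (Tk k)%:R else 0)).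
    rewrite mulr_sumr; apply: ler_sum => k _; case: ifP => hk.
      have := B2 k (ltn_ord k) hk; nra.
    by rewrite subr0; exact: B1.
  apply: le_trans h _.
  rewrite sumrB -mulr_sumr B3 -big_mkcond /= -mulr_sumr.
  have : 0 < G - delta by lra.
  nra.
have zn := HN n Nn.
have xim : xi * m%:R = (G - delta - eta) * eps by rewrite /xi divfK // gt_eqF.
have zm := ler_wpM2r (ltW m0) zn.
have key : xi * n%:R * m%:R = (G - delta - eta) * eps * n%:R by rewrite mulrAC xim.
rewrite -(ler_pM2r m0) mulNr divfK ?gt_eqF //.
lra.
Qed.


End Prob.

Unset Implicit Arguments.

Theorem lemma3p2 (R : realType) (dT : measure_display) (T : measurableType dT)
  (P : probability T R) (m : nat) (A : seq R) (X : 'I_m -> nat -> T -> R)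
  (S : ('I_m -> R) -> R) (D eps delta eta : R) (p1 p2 : 'I_m -> R) :
  (1 < m)%N ->
  (* X^{(j)}_i are random variables with values in the finite alphabet A *)
  (forall j i, measurable_fun setT (X j i)) ->
  (forall j i w, X j i w \in A) ->
  (* independent and identically distributed *)
  mutual_indep P (fun ji : 'I_m * nat => X ji.1 ji.2) ->
  (forall j i j' i' (B : set R), measurable B ->
      P (X j i @^-1` B) = P (X j' i' @^-1` B)) ->
  (* S : A^m -> [0, oo) *)
  (forall x, inA A x -> 0 <= S x) ->
  (exists x, inA A x /\ S x != 0) ->
  (forall (s : {perm 'I_m}) x, inA A x -> S (fun j => x (s j)) = S x) ->
  (exists M : R, forall x, inA A x -> S x <= M) ->
  0 < D ->
  (forall x y, inA A x -> inA A y -> differ_le1 x y -> `|S x - S y| <= D) ->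
  0 < eps ->
  0 < delta < gamma_star P X S ->
  (forall j : 'I_m, (0 < val j)%N -> 0 < p1 j < 1 /\ 1 < p2 j) ->
  (forall p : 'I_m -> R, (forall j : 'I_m, (0 < val j)%N -> 0 < p j) ->
      (exists j : 'I_m, (0 < val j)%N /\ ~ (p1 j <= p j <= p2 j)) ->
      gamma_p P X S p <= delta) ->
  0 < eta < gamma_star P X S - delta ->
  exists N : nat, forall n : nat, (N <= n)%N ->
    forall v d : nat, (0 < v)%N -> (0 < d)%N -> n = (v * d)%N ->
    forall r : 'I_m -> nat -> nat, in_Rbar n v d eps p1 p2 r ->
    ('E_P[(fun w => Lr X S v d r w - Ln X S n w)%R]
       <= (- (eta * eps * n%:R / m%:R))%R%:E)%E.
Proof.
move=> Hm mX XA Xind Xid S0 _ Sperm [M SMb] _ _ eps0 dlt _ Hgp eta0.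
have Hm0 : (0 < m)%N by apply: ltnW.
have SM' : forall x, inA A x -> S x <= Num.max M 0.
  by move=> x h; rewrite le_max SMb.
have M0' : 0 <= Num.max M 0 by rewrite le_max lexx orbT.
exact: (main_sec Hm0 mX XA Xind Xid SM' M0' Sperm eps0 dlt Hgp eta0).
Qed.
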